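(* Let $1\le p\le 2$, let $\theta_c\in[0,\frac{\pi}{2}]$ be the angle with $\cos^2\theta_c=\frac{p-1}{p}$, and let $G(\theta)=\cos^{p-1}(\theta)\sin(\theta)$ on $[0,\frac{\pi}{2}]$. Then: (a) $G$ is increasing on $[0,\theta_c]$ and decreasing on $[\theta_c,\frac{\pi}{2}]$. (b) For $0\le\theta\le\frac{\pi}{4}$ we have $G(\frac{\pi}{2}-\theta)\ge G(\theta)$, with equality only at the endpoints. (c) If $1\le p\le 1.73$, then for every $\alpha>0$ with $\theta_c+\alpha<\frac{\pi}{2}$, $G(\theta_c-\alpha)\ge G(\theta_c+\alpha)$. (d) If $1\le p\le 1.73$ and $x\le\theta_c\le y$ (in $[0,\frac{\pi}{2}]$) satisfy $G(x)=G(y)$, then $\frac{1}{2}(x+y)\le\theta_c$. *)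

(* Defs.v *)
From mathcomp Require Import all_boot all_order all_algebra.
From mathcomp Require Import all_classical all_reals all_analysis.
Set Implicit Arguments. Unset Strict Implicit. Unset Printing Implicit Defensive.
Import Order.TTheory GRing.Theory Num.Theory.
Local Open Scope ring_scope.

(* G(theta) = cos(theta)^(p-1) * sin(theta), real exponent via powR
   (with the convention 0 `^ 0 = 1, so for p = 1, G = sin). *)
Definition Gfun (R : realType) (p : R) (t : R) : R :=
  powR (cos t) (p - 1) * sin t.

(* Main.v *)
Require Import Defs.
From mathcomp Require Import all_boot all_order all_algebra.
From mathcomp Require Import all_classical all_reals all_analysis.
From mathcomp Require Import ring lra.
Import Order.TTheory GRing.Theory Num.Theory.
Local Open Scope ring_scope.

Section H.
Context {R : realType}.
Implicit Types t : R.

Lemma is_derive_comp1 {f g : R -> R} {x df dg : R} :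
  is_derive x 1 f df -> is_derive (f x) 1 g dg -> is_derive x 1 (g \o f) (dg * df).
Proof.
move=> [fd fv] [gd gv].
have d : derivable (g \o f) x 1.
  apply/derivable1_diffP; apply: differentiable_comp; exact/derivable1_diffP.
apply: DeriveDef => //.
by rewrite -derive1E derive1_comp // !derive1E fv gv.
Qed.

Lemma sc_pos t : 0 < t < pi/2 -> 0 < sin t /\ 0 < cos t.
Proof.
move=> ht; split; first exact: sin_gt0_pihalf.
apply: cos_gt0_pihalf; case/andP: ht => h1 ->; rewrite andbT.
by apply: lt_trans h1; rewrite oppr_lt0 divr_gt0 // pi_gt0.
Qed.

Definition F (q t : R) := q * ln (cos t) + ln (sin t).
Definition dF (q t : R) := q * ((cos t)^-1 * - sin t) + (sin t)^-1 * cos t.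

Lemma GE p t : 0 < t < pi/2 -> Gfun p t = expR (F (p-1) t).
Proof.
move=> /sc_pos [s0 c0].
rewrite /Gfun /F /powR gt_eqF // expRD lnK //.
Qed.

Lemma is_derive_F q t : 0 < t < pi/2 -> is_derive t 1 (F q) (dF q t).
Proof.
move=> /sc_pos [s0 c0].
have h1 := is_derive_comp1 (is_derive_cos t) (is_derive1_ln c0).
have h2 := is_derive_comp1 (is_derive_sin t) (is_derive1_ln s0).
have h3 := is_deriveD (is_deriveZ q h1) h2.
have -> : F q = q \*: (@ln R \o cos) + (@ln R \o sin) by apply/funext.
exact: h3.
Qed.

Lemma incr_gen (f df : R -> R) (a b : R) :
  (forall z : R, a <= z <= b -> is_derive z 1 f (df z)) ->
  (forall z, a < z < b -> 0 < df z) ->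
  forall x y, a <= x -> x < y -> y <= b -> f x < f y.
Proof.
move=> hd hp x y ax xy yb.
apply: (gtr0_derive1_lt_cc (a:=a) (b:=b)).
- move=> z; rewrite in_itv/= => /andP[h1 h2].
  have hz : a <= z <= b by rewrite !ltW.
  by have [] := hd z hz.
- move=> z; rewrite in_itv/= => /andP[h1 h2].
  have hz : a <= z <= b by rewrite !ltW.
  by rewrite derive1E; have [_ ->] := hd z hz; apply: hp; rewrite h1.
- apply: derivable_within_continuous => z; rewrite in_itv/= => hz.
  by have [] := hd z hz.
- by rewrite in_itv/= ax /= (le_trans (ltW xy)).
- by rewrite in_itv/= yb andbT (le_trans ax (ltW xy)).
- exact: xy.
Qed.

Lemma ndecr_gen (f df : R -> R) (a b : R) :
  (forall z : R, a <= z <= b -> is_derive z 1 f (df z)) ->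
  (forall z, a < z < b -> 0 <= df z) ->
  forall x y, a <= x -> x <= y -> y <= b -> f x <= f y.
Proof.
move=> hd hp x y ax xy yb.
apply: (ger0_derive1_le_cc (a:=a) (b:=b)).
- move=> z; rewrite in_itv/= => /andP[h1 h2].
  have hz : a <= z <= b by rewrite !ltW.
  by have [] := hd z hz.
- move=> z; rewrite in_itv/= => /andP[h1 h2].
  have hz : a <= z <= b by rewrite !ltW.
  by rewrite derive1E; have [_ ->] := hd z hz; apply: hp; rewrite h1.
- apply: derivable_within_continuous => z; rewrite in_itv/= => hz.
  by have [] := hd z hz.
- by rewrite in_itv/= ax /= (le_trans xy).
- by rewrite in_itv/= yb andbT (le_trans ax xy).
- exact: xy.
Qed.

Lemma decr_gen (f df : R -> R) (a b : R) :
  (forall z : R, a <= z <= b -> is_derive z 1 f (df z)) ->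
  (forall z, a < z < b -> df z < 0) ->
  forall x y, a <= x -> x < y -> y <= b -> f y < f x.
Proof.
move=> hd hp x y ax xy yb.
rewrite -ltrN2.
apply: (@incr_gen (fun z => - f z) (fun z => - df z) a b _ _ x y ax xy yb).
- move=> z hz; have := hd z hz => h; exact: is_deriveN.
- by move=> z hz; rewrite oppr_gt0 hp.
Qed.

Lemma sinBpi2 t : sin (pi/2 - t) = cos t.
Proof. by rewrite sinB sin_pihalf cos_pihalf mul1r mul0r subr0. Qed.
Lemma cosBpi2 t : cos (pi/2 - t) = sin t.
Proof. by rewrite cosB sin_pihalf cos_pihalf mul1r mul0r add0r. Qed.

Lemma in_sinitv t : 0 <= t <= pi/2 -> t \in `[-(pi/2), pi/2].
Proof.
have := @pi_gt0 R => h /andP[h1 h2]; rewrite in_itv/=; apply/andP; split => //; lra.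
Qed.

Lemma sin_le_cos t : 0 <= t <= pi/4 -> sin t <= cos t.
Proof.
have := @pi_gt0 R => h /andP[h1 h2].
have m1 : t \in `[-(pi/2), pi/2] by apply: in_sinitv; apply/andP; split; lra.
have m2 : (pi/2 - t) \in `[-(pi/2), pi/2] by apply: in_sinitv; apply/andP; split; lra.
rewrite -sinBpi2 leNgt (ltr_sin m2 m1) -leNgt; lra.
Qed.

Lemma sin_lt_cos t : 0 <= t < pi/4 -> sin t < cos t.
Proof.
have := @pi_gt0 R => h /andP[h1 h2].
have m1 : t \in `[-(pi/2), pi/2] by apply: in_sinitv; apply/andP; split; lra.
have m2 : (pi/2 - t) \in `[-(pi/2), pi/2] by apply: in_sinitv; apply/andP; split; lra.
rewrite -sinBpi2 (ltr_sin m1 m2); lra.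
Qed.

Lemma dF_eq q t : sin t != 0 -> cos t != 0 ->
  dF q t = (cos t ^+ 2 - q * sin t ^+ 2) / (sin t * cos t).
Proof. by move=> s0 c0; rewrite /dF; field; rewrite s0 c0. Qed.

Lemma key_alg (q s1 c1 s2 c2 : R) :
  c1 ^+ 2 + s1 ^+ 2 = 1 -> c2 ^+ 2 + s2 ^+ 2 = 1 -> q * s1 ^+ 2 = c1 ^+ 2 ->
  q <= 1 -> 0 < s1 -> 0 < c1 ->
  0 < (s1 * c2 - c1 * s2) * (c1 * c2 + s1 * s2) ->
  0 < (s1 * c2 + c1 * s2) * (c1 * c2 - s1 * s2) ->
  ((c1 * c2 + s1 * s2) ^+ 2 - q * (s1 * c2 - c1 * s2) ^+ 2) /
     ((s1 * c2 - c1 * s2) * (c1 * c2 + s1 * s2)) +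
  ((c1 * c2 - s1 * s2) ^+ 2 - q * (s1 * c2 + c1 * s2) ^+ 2) /
     ((s1 * c2 + c1 * s2) * (c1 * c2 - s1 * s2)) <= 0.
Proof.
move=> e1 e2 e3 q1 s0 c0.
set N1 := (c1 * c2 + s1 * s2) ^+ 2 - q * (s1 * c2 - c1 * s2) ^+ 2.
set N2 := (c1 * c2 - s1 * s2) ^+ 2 - q * (s1 * c2 + c1 * s2) ^+ 2.
set D1 := (s1 * c2 - c1 * s2) * (c1 * c2 + s1 * s2).
set D2 := (s1 * c2 + c1 * s2) * (c1 * c2 - s1 * s2).
move=> d1 d2.
have z1 : s1 ^+ 2 + c1 ^+ 2 - 1 = 0 by rewrite -e1; ring.
have z2 : s2 ^+ 2 + c2 ^+ 2 - 1 = 0 by rewrite -e2; ring.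
have z3 : q * s1 ^+ 2 - c1 ^+ 2 = 0 by rewrite e3 subrr.
have X : s1 ^+ 2 * (N1 * D2 + N2 * D1 + 2%:R * (1 - q) * (s1 * c1) * s2 ^+ 2) =
  ((-2%:R)*c1*s1^+3*c2^+2*s2^+2 + (-2%:R)*c1*s1^+3*s2^+4 + 2%:R*c1*s1*s2^+2 + (-2%:R)*c1*s1*c2^+2*s2^+2 + 2%:R*c1^+3*s1*c2^+2*s2^+2 + (-2%:R)*c1*s1*s2^+4 + 2%:R*c1^+3*s1*s2^+4) * (s1 ^+ 2 + c1 ^+ 2 - 1) +
  ((-2%:R)*c1*s1*s2^+2 + 4%:R*c1^+3*s1*s2^+2) * (s2 ^+ 2 + c2 ^+ 2 - 1) +
  ((-2%:R)*c1*s1^+3*c2^+4 + (-2%:R)*c1*s1^+3*c2^+2*s2^+2 + 2%:R*c1^+3*s1*c2^+2*s2^+2 + 2%:R*c1^+3*s1*s2^+4 + (-2%:R)*c1*s1*s2^+2) * (q * s1 ^+ 2 - c1 ^+ 2).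
  by rewrite /N1 /N2 /D1 /D2; ring.
rewrite z1 z2 z3 !mulr0 !addr0 in X.
have /eqP := X; rewrite mulf_eq0 expf_eq0 /= (gt_eqF s0) /= => /eqP P0.
have E : N1 / D1 + N2 / D2 = (N1 * D2 + N2 * D1) / (D1 * D2).
  by field; rewrite (gt_eqF d1) (gt_eqF d2).
rewrite E.
have -> : N1 * D2 + N2 * D1 = - (2%:R * (1 - q) * (s1 * c1) * s2 ^+ 2).
  by apply/eqP; rewrite -subr_eq0 opprK P0.
rewrite mulNr oppr_le0; apply: divr_ge0; last by rewrite ltW // mulr_gt0.
apply: mulr_ge0; last exact: sqr_ge0.
by apply: mulr_ge0; [apply: mulr_ge0 => //; lra | rewrite ltW // mulr_gt0].
Qed.
End H.

Section H2.
Variable R : realType.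
Implicit Types t : R.

Lemma key (q th b : R) : 0 < sin th -> 0 < cos th ->
  q * sin th ^+ 2 = cos th ^+ 2 -> q <= 1 ->
  0 < sin (th - b) -> 0 < cos (th - b) -> 0 < sin (th + b) -> 0 < cos (th + b) ->
  dF q (th - b) + dF q (th + b) <= 0.
Proof.
move=> s0 c0 e3 q1 a1 a2 a3 a4.
rewrite !dF_eq ?gt_eqF //.
have d1 := mulr_gt0 a1 a2; have d2 := mulr_gt0 a3 a4.
rewrite sinB cosB sinD cosD in d1 d2 *.
apply: key_alg => //; exact: cos2Dsin2.
Qed.

Lemma derive_h q th t : 0 < th - t -> th + t < pi / 2 -> 0 < th + t -> th - t < pi/2 ->
  is_derive t 1 (fun y => F q (th - y) - F q (th + y))
     (- dF q (th - t) - dF q (th + t)).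
Proof.
move=> h1 h2 h3 h4.
have i1 : is_derive t 1 (fun y : R => th - y) (-1).
  have := is_deriveB (is_derive_cst th t 1) (is_derive_id t 1).
  by rewrite sub0r.
have i2 : is_derive t 1 (fun y : R => th + y) 1.
  have := is_deriveD (is_derive_cst th t 1) (is_derive_id t 1).
  by rewrite add0r.
have m1 : 0 < th - t < pi/2 by rewrite h1 h4.
have m2 : 0 < th + t < pi/2 by rewrite h3 h2.
have j1 := is_derive_comp1 i1 (is_derive_F q (th - t) m1).
have j2 := is_derive_comp1 i2 (is_derive_F q (th + t) m2).
have := is_deriveB j1 j2.
by rewrite mulrN1 mulr1.
Qed.
End H2.

Theorem lemma2p3 (R : realType) (p thc : R) :
  1 <= p <= 2 ->
  0 <= thc <= pi / 2 ->
  cos thc ^+ 2 = (p - 1) / p ->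
  (* (a) *)
  ((forall x y : R, 0 <= x -> x < y -> y <= thc -> Gfun p x < Gfun p y) /\
   (forall x y : R, thc <= x -> x < y -> y <= pi / 2 -> Gfun p y < Gfun p x)) /\
  (* (b) *)
  (forall t : R, 0 <= t <= pi / 4 ->
     Gfun p t <= Gfun p (pi / 2 - t) /\
     (p < 2 -> Gfun p (pi / 2 - t) = Gfun p t -> t = 0 \/ t = pi / 4)) /\
  (* (c) *)
  (p <= 173 / 100 ->
   forall a : R, 0 < a -> thc + a < pi / 2 ->
     Gfun p (thc + a) <= Gfun p (thc - a)) /\
  (* (d) *)
  (p <= 173 / 100 ->
   forall x y : R, 0 <= x -> x <= thc -> thc <= y -> y <= pi / 2 ->
     Gfun p x = Gfun p y -> (x + y) / 2 <= thc).
Proof.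
move=> /andP[p1 p2] /andP[th0 th1] hc.
have pi0 : 0 < (pi : R) := pi_gt0 R.
case: (ltgtP p 1) => [pl1|pg1|pe1].
- by exfalso; lra.
- have p0 : 0 < p by lra.
  have hc' : p * cos thc ^+ 2 = p - 1 by rewrite hc; field; rewrite gt_eqF.
  have cpos : 0 < cos thc.
    have cge : 0 <= cos thc by apply: cos_ge0_pihalf; apply/andP; split; lra.
    rewrite lt_neqAle cge andbT eq_sym; apply/eqP => c0.
    by move: hc'; rewrite c0 expr0n /= mulr0; lra.
  have thlt : thc < pi / 2.
    by rewrite lt_neqAle th1 andbT; apply/eqP => e; move: cpos; rewrite e cos_pihalf ltxx.
  have thgt : 0 < thc.
    rewrite lt_neqAle th0 andbT; apply/eqP => e.
    by move: hc'; rewrite -e cos0 expr1n mulr1; lra.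
  have spos : 0 < sin thc by apply: sin_gt0_pihalf; rewrite thgt thlt.
  have e3 : (p - 1) * sin thc ^+ 2 = cos thc ^+ 2.
    apply/eqP; rewrite -subr_eq0 sin2cos2.
    have -> : (p - 1) * (1 - cos thc ^+ 2) - cos thc ^+ 2 = (p - 1) - p * cos thc ^+ 2 by ring.
    by rewrite hc' subrr.
  have q1 : p - 1 <= 1 by lra.
  have th4 : pi / 4 <= thc.
    rewrite leNgt; apply/negP => hlt.
    have H : sin thc < cos thc by apply: sin_lt_cos; rewrite th0 hlt.
    have H2 : sin thc ^+ 2 < cos thc ^+ 2 by nra.
    move: H2; rewrite sin2cos2 => H2.
    nra.
  have Gpos : forall t : R, 0 < t < pi / 2 -> 0 < Gfun p t.
    by move=> t ht; rewrite (GE p _ ht) expR_gt0.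
  have G0 : Gfun p 0 = 0 by rewrite /Gfun sin0 mulr0.
  have Gpi2 : Gfun p (pi / 2) = 0.
    by rewrite /Gfun cos_pihalf powR0 ?mul0r // subr_eq0 gt_eqF.
  have mthc : thc \in `[0, pi] by rewrite in_itv/=; apply/andP; split; lra.
  have dFpos : forall z : R, 0 < z < thc -> 0 < dF (p - 1) z.
    move=> z /andP[z0 zt].
    have zz : 0 < z < pi / 2 by rewrite z0 /=; lra.
    have [sz cz] := sc_pos _ zz.
    rewrite dF_eq ?gt_eqF //; apply: divr_gt0; last exact: mulr_gt0.
    have mz : z \in `[0, pi] by rewrite in_itv/=; apply/andP; split; lra.
    have cc : cos thc < cos z by rewrite (ltr_cos mz mthc).
    have cc2 : cos thc ^+ 2 < cos z ^+ 2 by nra.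
    rewrite sin2cos2; nra.
  have dFneg : forall z : R, thc < z < pi / 2 -> dF (p - 1) z < 0.
    move=> z /andP[z0 zt].
    have zz : 0 < z < pi / 2 by rewrite zt andbT; lra.
    have [sz cz] := sc_pos _ zz.
    rewrite dF_eq ?gt_eqF //.
    have Dp : 0 < (sin z * cos z)^-1 by rewrite invr_gt0 mulr_gt0.
    rewrite pmulr_llt0 //.
    have mz : z \in `[0, pi] by rewrite in_itv/=; apply/andP; split; lra.
    have cc : cos z < cos thc by rewrite (ltr_cos mthc mz).
    have cc2 : cos z ^+ 2 < cos thc ^+ 2 by nra.
    rewrite sin2cos2; nra.
  have a1 : forall x y : R, 0 <= x -> x < y -> y <= thc -> Gfun p x < Gfun p y.
    move=> x y x0 xy yt.
    have yy : 0 < y < pi / 2 by apply/andP; split; lra.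
    case: (eqVneq x 0) => [->|xn0]; first by rewrite G0 Gpos.
    have xx : 0 < x < pi / 2 by apply/andP; split; [rewrite lt_neqAle eq_sym xn0 x0 | lra].
    rewrite (GE p _ xx) (GE p _ yy) ltr_expR.
    apply: (incr_gen (F (p - 1)) (dF (p - 1)) x y _ _ x y (lexx x) xy (lexx y)).
      by move=> z /andP[h1 h2]; apply: is_derive_F; apply/andP; split; lra.
    by move=> z /andP[h1 h2]; apply: dFpos; apply/andP; split; lra.
  have partc : forall a, 0 < a -> thc + a < pi / 2 -> Gfun p (thc + a) <= Gfun p (thc - a).
    move=> a a0 ha.
    have m1 : 0 < thc + a < pi / 2 by apply/andP; split; lra.
    have m2 : 0 < thc - a < pi / 2 by apply/andP; split; lra.
    rewrite (GE p _ m1) (GE p _ m2) ler_expR.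
    have hd : forall z : R, 0 <= z <= a ->
      is_derive z 1 (fun y : R => F (p - 1) (thc - y) - F (p - 1) (thc + y))
       (- dF (p - 1) (thc - z) - dF (p - 1) (thc + z)).
      by move=> z /andP[z0 za]; apply: derive_h; lra.
    have hp : forall z : R, 0 < z < a -> 0 <= - dF (p - 1) (thc - z) - dF (p - 1) (thc + z).
      move=> z /andP[z0 za].
      have w1 : 0 < thc - z < pi / 2 by apply/andP; split; lra.
      have w2 : 0 < thc + z < pi / 2 by apply/andP; split; lra.
      have [u1 u2] := sc_pos _ w1.
      have [u3 u4] := sc_pos _ w2.
      have := key _ (p - 1) thc z spos cpos e3 q1 u1 u2 u3 u4.
      lra.
    have := @ndecr_gen R _ _ 0 a hd hp 0 a (lexx 0) (ltW a0) (lexx a).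
    rewrite /= subr0 addr0 subrr => h; lra.
  split; [split|split; [|split]].
  + exact: a1.
  + move=> x y tx xy y2.
    have xx : 0 < x < pi / 2 by apply/andP; split; lra.
    case: (eqVneq y (pi / 2)) => [->|yn]; first by rewrite Gpi2 Gpos.
    have yy : 0 < y < pi / 2 by apply/andP; split; [lra | rewrite lt_neqAle yn y2].
    rewrite (GE p _ xx) (GE p _ yy) ltr_expR.
    apply: (decr_gen (F (p - 1)) (dF (p - 1)) x y _ _ x y (lexx x) xy (lexx y)).
      by move=> z /andP[h1 h2]; apply: is_derive_F; apply/andP; split; lra.
    by move=> z /andP[h1 h2]; apply: dFneg; apply/andP; split; lra.
  + move=> t /andP[t0 t4].
    case: (eqVneq t 0) => [->|tn0].
      by rewrite subr0 G0 Gpi2; split => // _ _; left.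
    have tt : 0 < t < pi / 2 by apply/andP; split; [rewrite lt_neqAle eq_sym tn0 t0 | lra].
    have tt' : 0 < pi / 2 - t < pi / 2 by apply/andP; split; lra.
    rewrite (GE p _ tt) (GE p _ tt') /F sinBpi2 cosBpi2.
    have [st ct] := sc_pos _ tt.
    have sc : sin t <= cos t by apply: sin_le_cos; rewrite t0 t4.
    have lnle : ln (sin t) <= ln (cos t) by rewrite ler_ln ?posrE.
    split.
      rewrite ler_expR; nra.
    move=> p2' /expR_inj E; right.
    have H : (p - 1) * ln (sin t) + ln (cos t) - ((p - 1) * ln (cos t) + ln (sin t))
       = (2 - p) * (ln (cos t) - ln (sin t)) by ring.
    rewrite E subrr in H.
    move/esym/eqP: H; rewrite mulf_eq0 => /orP[/eqP|/eqP L]; first lra.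
    have cs : cos t = sin t by apply: ln_inj; rewrite ?posrE //; lra.
    case: (ltP t (pi / 4)) => ht; last lra.
    have H : sin t < cos t by apply: sin_lt_cos; rewrite t0 ht.
    by move: H; rewrite cs ltxx.
  + by move=> _; exact: partc.
  + move=> _ x y x0 xt ty y2 E.
    rewrite leNgt; apply/negP => hlt.
    case: (eqVneq y (pi / 2)) => [ey|yn].
      rewrite ey Gpi2 in E.
      case: (eqVneq x 0) => [ex|xn]; first by rewrite ex ey in hlt; lra.
      have xx : 0 < x < pi / 2 by apply/andP; split; [rewrite lt_neqAle eq_sym xn x0 | lra].
      by have := Gpos x xx; rewrite E ltxx.
    have yy : y < pi / 2 by rewrite lt_neqAle yn y2.
    have := partc (y - thc) (_ : 0 < y - thc) (_ : thc + (y - thc) < pi / 2).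
    have -> : thc + (y - thc) = y by ring.
    have := a1 (thc - (y - thc)) x (_ : 0 <= thc - (y - thc)) (_ : thc - (y - thc) < x) xt.
    rewrite E => h1 h2.
    all: try lra.
subst p.
have G1 : forall t : R, Gfun 1 t = sin t.
  by move=> t; rewrite /Gfun subrr powRr0 mul1r.
have hc0 : cos thc = 0.
  have : cos thc ^+ 2 = 0 by rewrite hc subrr mul0r.
  by move/eqP; rewrite expf_eq0 /= => /eqP.
have tpi : thc = pi / 2.
  apply: cos_inj; last by rewrite hc0 cos_pihalf.
  - by rewrite in_itv/=; apply/andP; split; lra.
  - by rewrite in_itv/=; apply/andP; split; lra.
split; [split|split; [|split]].
- move=> x y x0 xy yt; rewrite !G1.
  have mx : x \in `[-(pi/2), pi/2] by apply: in_sinitv; apply/andP; split; lra.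
  have my : y \in `[-(pi/2), pi/2] by apply: in_sinitv; apply/andP; split; lra.
  by rewrite (ltr_sin mx my).
- move=> x y tx xy y2; lra.
- move=> t /andP[t0 t4]; rewrite !G1 sinBpi2; split.
    by apply: sin_le_cos; rewrite t0 t4.
  move=> _ E; right.
  case: (ltP t (pi/4)) => ht; last lra.
  have H : sin t < cos t by apply: sin_lt_cos; rewrite t0 ht.
  by move: H; rewrite E ltxx.
- move=> _ a a0 ha; lra.
- move=> _ x y x0 xt ty y2 _; lra.
Qed.
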